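(* Let $\tau\ge1$. If Weighted Majority Rule 1 selects $P$ over $Q$, then $SC(P)\le SC(Q)+2\,SC(Z)$ for every point $Z$ of the metric space.
   Context: Voters $N=\{1,\dots,n\}$ and candidates are points of an arbitrary metric space $(X,d)$. Voter $i$ prefers $P$ to $Q$ only if $d(i,P)\le d(i,Q)$, with preference strength $\alpha_i^{PQ}=d(i,Q)/d(i,P)\ge1$. $SC(Y)=\sum_{i\in N}d(i,Y)$ for any $Y\in X$. For candidates $P,Q$ and threshold $\tau$, let $A_2$ ($A_1$) be the voters preferring $P$ with strength $>\tau$ ($\le\tau$), and $B_2$ ($B_1$) those preferring $Q$ with strength $>\tau$ ($\le\tau$). Weighted Majority Rule 1: if $\tau\ge\sqrt2+1$, weight $\frac{\tau+1}{\tau-1}$ for strength $>\tau$ and weight $1$ for strength $\le\tau$; if $\tau<\sqrt2+1$, weight $\tau$ for strength $>\tau$ and weight $1$ for strength $\le\tau$. It selects $P$ over $Q$ when the total weight of voters preferring $P$ is at least that of voters preferring $Q$. *)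

(* Defs.v *)
From Stdlib Require Import Reals Lra List.
Import ListNotations.
Open Scope R_scope.

Definition is_metric {X : Type} (d : X -> X -> R) : Prop :=
  (forall x y, 0 <= d x y) /\
  (forall x y, d x y = 0 <-> x = y) /\
  (forall x y, d x y = d y x) /\
  (forall x y z, d x z <= d x y + d y z).

Definition rsum (n : nat) (f : nat -> R) : R :=
  fold_right Rplus 0 (map f (seq 0 n)).

Definition SC {X : Type} (d : X -> X -> R) (n : nat) (v : nat -> X) (Y : X) : R :=
  rsum n (fun i => d (v i) Y).

Definition wmr1_heavy (tau : R) : R :=
  if Rle_dec (sqrt 2 + 1) tau then (tau + 1) / (tau - 1) else tau.

(* Strength of preference for A over B is d(x,B)/d(x,A); "strength > tau"
   is encoded as tau*d(x,A) < d(x,B) (no division), so d(x,A)=0<d(x,B)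
   counts as infinite strength and d(x,A)=d(x,B)=0 as strength 1 <= tau. *)
Definition wmr1_weight {X : Type} (d : X -> X -> R) (tau : R) (x A B : X) : R :=
  if Rlt_dec (tau * d x A) (d x B) then wmr1_heavy tau else 1.

(* pref i = true : voter i prefers P; false : voter i prefers Q. *)
Definition weightP {X : Type} (d : X -> X -> R) (tau : R) (n : nat)
  (v : nat -> X) (pref : nat -> bool) (P Q : X) : R :=
  rsum n (fun i => if pref i then wmr1_weight d tau (v i) P Q else 0).

Definition weightQ {X : Type} (d : X -> X -> R) (tau : R) (n : nat)
  (v : nat -> X) (pref : nat -> bool) (P Q : X) : R :=
  rsum n (fun i => if pref i then 0 else wmr1_weight d tau (v i) Q P).

Definition wmr1_selects {X : Type} (d : X -> X -> R) (tau : R) (n : nat)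
  (v : nat -> X) (pref : nat -> bool) (P Q : X) : Prop :=
  weightP d tau n v pref P Q >= weightQ d tau n v pref P Q.

(* Main.v *)
Require Import Defs.
From Stdlib Require Import Reals Lra Lia Psatz List.
Import ListNotations.
Open Scope R_scope.

Lemma QL_bound tau p q a b z : 1 <= tau -> tau < 3 -> b <= a -> a <= tau * b ->
  p <= a + z -> b <= z + q ->
  (1 + tau) * (a - b - 2 * z) <= (3*tau - 1) * q - (3 - tau) * p.
Proof.
  intros.
  assert (0 <= (3 - tau) * (a + z - p)) by (apply Rmult_le_pos; lra).
  assert (0 <= (3*tau - 1) * (z + q - b)) by (apply Rmult_le_pos; lra).
  nra.
Qed.

Lemma PH_bound tau p q a b z : 1 <= tau -> tau < 3 -> tau * a < b ->
  p <= a + z -> b <= z + q ->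
  (3*tau - 1) * p - (3 - tau) * q <= (1 + tau) * (b - a + 2 * z).
Proof.
  intros.
  assert (0 <= (3*tau - 1) * (z + a - p)) by (apply Rmult_le_pos; lra).
  assert (0 <= (3 - tau) * (z + q - b)) by (apply Rmult_le_pos; lra).
  nra.
Qed.

Lemma M_bound tau h p q K : 1 <= tau -> tau < 3 -> 0 <= q -> 0 <= h ->
  ((h = tau) \/ (h * (tau - 1) = tau + 1 /\ 2 <= tau)) ->
  K <= p - q -> K * (1 + tau) <= (3*tau - 1) * q - (3 - tau) * p ->
  (1 + tau) * h * K <= (3*tau - 1) * p - (3 - tau) * q.
Proof.
  intros Ht1 Ht3 Hq Hh0 Hc HK1 HK2.
  destruct (Rle_dec p (tau * q)) as [Hp|Hp].
  - apply Rle_trans with ((1 + tau) * h * (p - q)).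
    { apply Rmult_le_compat_l; [nra|lra]. }
    destruct Hc as [Hc|[Hc H2]].
    + subst h.
      assert (0 <= (tau-1)*(tau-1)*(tau*q-p)) by
        (apply Rmult_le_pos; [nra|lra]).
      assert (0 <= (tau-1)*q*(3-tau)*(1+tau)) by
        (repeat apply Rmult_le_pos; lra).
      nra.
    + apply Rmult_le_reg_l with (tau - 1); [lra|].
      replace ((tau - 1) * ((1 + tau) * h * (p - q))) with
        ((1 + tau) * (p - q) * (h * (tau - 1))) by ring.
      rewrite Hc.
      assert (0 <= tau*(3-tau)*(tau*q-p)) by
        (repeat apply Rmult_le_pos; lra).
      assert (0 <= q*(tau-2)*(tau-1)*(tau+1)) by
        (repeat apply Rmult_le_pos; lra).
      nra.
  - apply Rnot_le_lt in Hp.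
    set (L := ((3*tau - 1) * q - (3 - tau) * p) / (1 + tau)).
    assert (HL : L * (1 + tau) = (3*tau - 1) * q - (3 - tau) * p)
      by (unfold L; field; lra).
    assert (HKL : K <= L).
    { apply Rmult_le_reg_r with (1 + tau); [lra|]. lra. }
    apply Rle_trans with ((1 + tau) * h * L).
    { apply Rmult_le_compat_l; [nra|lra]. }
    destruct Hc as [Hc|[Hc H2]].
    + subst h.
      assert (0 <= (6*tau-1-tau*tau)*(p-tau*q)) by
        (apply Rmult_le_pos; nra).
      assert (0 <= q*(3-tau)*(tau-1)*(tau+1)) by
        (repeat apply Rmult_le_pos; lra).
      replace ((1 + tau) * tau * L) with (tau * (L * (1 + tau))) by ring.
      rewrite HL. nra.
    + apply Rmult_le_reg_l with (tau - 1); [lra|].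
      replace ((tau - 1) * ((1 + tau) * h * L)) with
        ((L * (1 + tau)) * (h * (tau - 1))) by ring.
      rewrite Hc, HL.
      assert (0 <= (2*tau*tau-2*tau+4)*(p-tau*q)) by
        (apply Rmult_le_pos; nra).
      assert (0 <= q*(tau-2)*(tau-1)*(tau+1)) by
        (repeat apply Rmult_le_pos; lra).
      nra.
Qed.

Lemma heavy_facts tau : 1 <= tau ->
  1 <= wmr1_heavy tau /\
  ((wmr1_heavy tau = tau /\ tau < 3) \/
   (wmr1_heavy tau * (tau - 1) = tau + 1 /\ 2 <= tau)).
Proof.
  intros Ht.
  assert (Hs : sqrt 2 * sqrt 2 = 2) by (apply sqrt_sqrt; lra).
  assert (Hs0 : 0 <= sqrt 2) by apply sqrt_pos.
  assert (Hs1 : 1 <= sqrt 2) by nra.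
  assert (Hs2 : sqrt 2 < 2) by nra.
  unfold wmr1_heavy. destruct (Rle_dec (sqrt 2 + 1) tau) as [H|H].
  - assert (E : (tau + 1) / (tau - 1) * (tau - 1) = tau + 1) by (field; lra).
    split; [|right; split; [exact E| lra]].
    apply Rmult_le_reg_r with (tau - 1); [lra|]. rewrite E. lra.
  - split; [lra|]. left; split; [reflexivity|lra].
Qed.

Lemma voter_key tau p q : 1 <= tau -> 0 <= p -> 0 <= q ->
  exists K, 0 <= K /\ forall a b z, 0 <= a -> 0 <= b -> 0 <= z ->
    a <= z + p -> p <= a + z -> b <= z + q -> q <= b + z ->
    (a <= b -> a - b - 2 * z <= - K * (if Rlt_dec (tau * a) b then wmr1_heavy tau else 1)) /\
    (b <= a -> a - b - 2 * z <= K * (if Rlt_dec (tau * b) a then wmr1_heavy tau else 1)).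
Proof.
  intros Ht Hp Hq.
  destruct (heavy_facts tau Ht) as [Hh1 Hc].
  set (h := wmr1_heavy tau) in *.
  assert (Hgen : forall a b z, a <= z + p -> q <= b + z -> a - b - 2 * z <= p - q) by (intros; lra).
  assert (HgenP : forall a b z, a <= b -> p <= a + z -> b <= z + q -> a - b - 2 * z <= -(p - q)) by (intros; lra).
  destruct (Rle_dec (p - q) 0) as [Hd|Hd].
  { exists 0. split; [lra|]. intros a b z _ _ _ H1 H2 H3 H4. split; intros Hab.
    - destruct (Rlt_dec (tau * a) b); specialize (Hgen a b z H1 H4); lra.
    - destruct (Rlt_dec (tau * b) a); specialize (Hgen a b z H1 H4); lra. }
  apply Rnot_le_lt in Hd.
  destruct (Rle_dec 3 tau) as [H3|H3].
  { exists (p - q). split; [lra|]. intros a b z Ha Hb Hz H1 H2 H3' H4. split; intros Hab.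
    - specialize (HgenP a b z Hab H2 H3').
      destruct (Rlt_dec (tau * a) b) as [Hs|Hs]; [|lra].
      destruct Hc as [[E E9]|[E _]]; [lra|].
      assert (h <= 2) by nra.
      assert (0 <= (tau - 3) * a) by (apply Rmult_le_pos; lra).
      nra.
    - specialize (Hgen a b z H1 H4).
      destruct (Rlt_dec (tau * b) a); nra. }
  apply Rnot_le_lt in H3.
  set (L := ((3*tau - 1) * q - (3 - tau) * p) / (1 + tau)).
  assert (HL : L * (1 + tau) = (3*tau - 1) * q - (3 - tau) * p)
    by (unfold L; field; lra).
  assert (Hc' : (h = tau) \/ (h * (tau - 1) = tau + 1 /\ 2 <= tau)) by
    (destruct Hc as [[? ?]|?]; [left|right]; auto).
  assert (HQL : forall a b z, b <= a -> a <= tau * b -> p <= a + z -> b <= z + q ->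
     a - b - 2 * z <= L).
  { intros a b z ? ? ? ?. apply Rmult_le_reg_r with (1 + tau); [lra|].
    rewrite HL. rewrite Rmult_comm. apply QL_bound; lra. }
  assert (HPH : forall K a b z, K <= p - q -> K * (1 + tau) <= (3*tau - 1) * q - (3 - tau) * p ->
     tau * a < b -> p <= a + z -> b <= z + q -> a - b - 2 * z <= - (h * K)).
  { intros K a b z ? ? ? ? ?.
    assert (X1 := M_bound tau h p q K Ht H3 Hq ltac:(lra) Hc' H H0).
    assert (X2 := PH_bound tau p q a b z Ht H3 H1 H2 H4).
    nra. }
  destruct (Rle_dec L ((p - q) / h)) as [HL1|HL1].
  { exists ((p - q) / h).
    assert (E : h * ((p - q) / h) = p - q) by (field; lra).
    assert (E2 : (p - q) / h <= p - q).
    { apply Rmult_le_reg_l with h; [lra|]. rewrite E. nra. }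
    assert (E3 : 0 <= (p - q) / h).
    { apply Rmult_le_reg_l with h; [lra|]. rewrite E. lra. }
    split; [lra|]. intros a b z Ha Hb Hz H1 H2 H3' H4. split; intros Hab.
    - specialize (HgenP a b z Hab H2 H3').
      destruct (Rlt_dec (tau * a) b); nra.
    - specialize (Hgen a b z H1 H4).
      destruct (Rlt_dec (tau * b) a) as [Hs|Hs].
      + nra.
      + apply Rnot_lt_le in Hs. specialize (HQL a b z Hab Hs H2 H3'). lra. }
  apply Rnot_le_lt in HL1.
  assert (E0 : p - q < h * L).
  { assert (E : h * ((p - q) / h) = p - q) by (field; lra).
    rewrite <- E. apply Rmult_lt_compat_l; lra. }
  assert (Lpos : 0 < L).
  { assert (0 < (p - q) / h) by (apply Rdiv_lt_0_compat; lra). lra. }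
  destruct (Rle_dec L (p - q)) as [HL2|HL2].
  { exists L. split; [lra|]. intros a b z Ha Hb Hz H1 H2 H3' H4. split; intros Hab.
    - specialize (HgenP a b z Hab H2 H3').
      destruct (Rlt_dec (tau * a) b) as [Hs|Hs].
      + specialize (HPH L a b z HL2 ltac:(lra) Hs H2 H3'). lra.
      + lra.
    - specialize (Hgen a b z H1 H4).
      destruct (Rlt_dec (tau * b) a) as [Hs|Hs].
      + lra.
      + apply Rnot_lt_le in Hs. specialize (HQL a b z Hab Hs H2 H3'). lra. }
  apply Rnot_le_lt in HL2.
  exists (p - q). split; [lra|]. intros a b z Ha Hb Hz H1 H2 H3' H4. split; intros Hab.
  - specialize (HgenP a b z Hab H2 H3').
    destruct (Rlt_dec (tau * a) b) as [Hs|Hs].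
    + assert (X : (p - q) * (1 + tau) <= (3*tau - 1) * q - (3 - tau) * p).
      { rewrite <- HL. apply Rmult_le_compat_r; lra. }
      specialize (HPH (p - q) a b z ltac:(lra) X Hs H2 H3'). lra.
    + lra.
  - specialize (Hgen a b z H1 H4).
    destruct (Rlt_dec (tau * b) a); nra.
Qed.

Lemma fr_lin (l : list nat) (f g k : nat -> R) :
  fold_right Rplus 0 (map (fun i => f i - g i - 2 * k i) l) =
  fold_right Rplus 0 (map f l) - fold_right Rplus 0 (map g l) - 2 * fold_right Rplus 0 (map k l).
Proof. induction l; simpl; lra. Qed.

Lemma fr_le (l : list nat) (f g : nat -> R) :
  (forall i, In i l -> f i <= g i) ->
  fold_right Rplus 0 (map f l) <= fold_right Rplus 0 (map g l).
Proof.
  induction l; simpl; intros H; [lra|].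
  apply Rplus_le_compat; auto.
Qed.

Lemma fr_w (l : list nat) (K : R) (pref : nat -> bool) (u w : nat -> R) :
  fold_right Rplus 0 (map (fun i => if pref i then - K * u i else K * w i) l) =
  K * (fold_right Rplus 0 (map (fun i => if pref i then 0 else w i) l) -
       fold_right Rplus 0 (map (fun i => if pref i then u i else 0) l)).
Proof. induction l; simpl; [ring|]. destruct (pref a); rewrite IHl; ring. Qed.

Theorem mainTheorem5 (X : Type) (d : X -> X -> R) (hd : is_metric d)
  (n : nat) (v : nat -> X) (pref : nat -> bool) (P Q : X) (tau : R)
  (htau : 1 <= tau)
  (hprefP : forall i, (i < n)%nat -> pref i = true -> d (v i) P <= d (v i) Q)
  (hprefQ : forall i, (i < n)%nat -> pref i = false -> d (v i) Q <= d (v i) P)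
  (hsel : wmr1_selects d tau n v pref P Q) :
  forall Z : X, SC d n v P <= SC d n v Q + 2 * SC d n v Z.
Proof.
  intros Z.
  destruct hd as [Hnn [_ [Hsym Htri]]].
  destruct (voter_key tau (d Z P) (d Z Q) htau (Hnn _ _) (Hnn _ _)) as [K [HK0 HK]].
  unfold wmr1_selects, weightP, weightQ, rsum in hsel.
  unfold SC, rsum.
  cut (fold_right Rplus 0 (map (fun i => d (v i) P - d (v i) Q - 2 * d (v i) Z) (seq 0 n)) <= 0).
  { rewrite fr_lin. lra. }
  eapply Rle_trans.
  { apply fr_le with (g := fun i => if pref i then - K * wmr1_weight d tau (v i) P Q
                                    else K * wmr1_weight d tau (v i) Q P).
    intros i Hi. apply in_seq in Hi. destruct Hi as [_ Hi]. simpl in Hi.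
    assert (T1 : d (v i) P <= d (v i) Z + d Z P) by apply Htri.
    assert (T2 : d Z P <= d (v i) P + d (v i) Z).
    { rewrite (Hsym (v i) Z). rewrite Rplus_comm. apply Htri. }
    assert (T3 : d (v i) Q <= d (v i) Z + d Z Q) by apply Htri.
    assert (T4 : d Z Q <= d (v i) Q + d (v i) Z).
    { rewrite (Hsym (v i) Z). rewrite Rplus_comm. apply Htri. }
    destruct (HK (d (v i) P) (d (v i) Q) (d (v i) Z) (Hnn _ _) (Hnn _ _) (Hnn _ _) T1 T2 T3 T4)
      as [HA HB].
    unfold wmr1_weight.
    destruct (pref i) eqn:E.
    - apply HA. apply hprefP; auto; lia.
    - apply HB. apply hprefQ; auto; lia. }
  rewrite fr_w. assert (0 <= K) by lra. nra.
Qed.
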